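(* Let $G=(V,A)$ be a directed graph and $R,T\subseteq V$ with $R\cap T=\emptyset$. Let $\mathcal{Y}(G)=(\hat V,\hat A)$ be the forking of $G$, and let $\hat R=\{(r,0)\mid r\in R\}$ and $\hat T=\{(t,0)\mid t\in T\}$. Then there is a solution $S\subseteq V\setminus(R\cup T)$ of size at most $k$ for $(G,R,T)$ if and only if there is a solution $\hat S\subseteq \hat V$ of size at most $2k+|R\cup T|$ for $(\mathcal{Y}(G),\hat R,\hat T)$.
   Context: For a directed graph $G=(V,A)$, its forking is the directed graph $\mathcal{Y}(G)=(\hat V,\hat A)$ with $\hat V=V\times\{0,1\}$ and $\hat A=\{((u,0),(v,1))\mid (u,v)\in A\}\cup\{((v,1),(v,0))\mid v\in V\}$. For a directed graph $H$ with vertex set $W$ and subsets $R,T\subseteq W$, a solution for $(H,R,T)$ is a set $S\subseteq W$ such that the induced subgraph $H[R\cup S\cup T]$ contains a directed path from $r$ to $t$ for every $r\in R$ and every $t\in R\cup T$. *)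

(* Defs.v *)
(* A finite directed graph is a finType V with an arc relation a : rel V. *)
From mathcomp Require Import all_boot.
Set Implicit Arguments. Unset Strict Implicit. Unset Printing Implicit Defensive.

Definition induced (W : finType) (a : rel W) (U : {set W}) : rel W :=
  [rel x y | [&& x \in U, y \in U & a x y]].

Definition solution (W : finType) (a : rel W) (R T S : {set W}) : Prop :=
  forall r t, r \in R -> t \in R :|: T ->
    connect (induced a (R :|: S :|: T)) r t.

(* The forking Y(G): vertices V × {0,1} (false = 0, true = 1); arcs
   (u,0)->(v,1) for (u,v) ∈ A and (v,1)->(v,0) for v ∈ V. *)
Definition fork (V : finType) (a : rel V) : rel (V * bool) :=
  fun x y =>
    match x, y with
    | (u, false), (v, true) => a u v
    | (u, true), (v, false) => u == v
    | _, _ => false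
    end.

Definition hat0 (V : finType) (X : {set V}) : {set V * bool} :=
  [set (x, false) | x in X].

(* Main.v *)
Require Import Defs.
From mathcomp Require Import all_boot.
From mathcomp Require Import all_boot zify.

Lemma hat0P (V : finType) (X : {set V}) y :
  (y \in hat0 X) = (~~ y.2 && (y.1 \in X)).
Proof.
case: y => v b; apply/imsetP/andP => /=.
  by case=> x xX [-> ->].
by case=> /negbTE -> vX; exists v.
Qed.

Lemma path_inv (T : finType) (e : rel T) (P : T -> Prop) :
  (forall x y, P x -> e x y -> P y) ->
  forall p x, path e x p -> P x -> P (last x p).
Proof.
move=> H; elim=> [|y p IH] x //= /andP[exy pp] Px.
by apply: IH => //; apply: H exy.
Qed.

Lemma connect_map (T1 T2 : finType) (e1 : rel T1) (e2 : rel T2) (f : T1 -> T2) :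
  (forall x y, e1 x y -> connect e2 (f x) (f y)) ->
  forall x y, connect e1 x y -> connect e2 (f x) (f y).
Proof.
move=> H x y /connectP[p pp ->]; elim: p x pp => [|z p IH] x //= /andP[exz pp].
exact: connect_trans (H _ _ exz) (IH _ pp).
Qed.

Lemma last_step (T : finType) (e : rel T) x y :
  connect e x y -> x != y -> exists z, e z y.
Proof.
move=> /connectP[p pp ->]; elim/last_ind: p pp => [|p z _] //=; first by rewrite eqxx.
rewrite rcons_path last_rcons => /andP[_ h] _; by exists (last x p).
Qed.

Lemma forward (V : finType) (a : rel V) (R T S : {set V}) (k : nat) :
  #|S| <= k -> solution a R T S ->
  exists Sh : {set V * bool},
      #|Sh| <= 2 * k + #|R :|: T| /\ solution (fork a) (hat0 R) (hat0 T) Sh.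
Proof.
move=> Sk sol.
pose Sh := setX S setT :|: [set (v, true) | v in R :|: T].
exists Sh; split.
  apply: leq_trans (leq_card_setU _ _) _.
  rewrite cardsX cardsT card_bool.
  have := leq_imset_card (fun v => (v, true)) (R :|: T). move=> h. rewrite mulnC; apply: leq_add => //; by rewrite leq_mul2l Sk orbT.
move=> [r b] [t b']; rewrite in_setU !hat0P /=.
case: b => //= rR; case: b' => //= h.
have tRT : t \in R :|: T by rewrite in_setU.
have c := sol r t rR tRT.
apply: (@connect_map _ _ _ _ (fun v => (v, false)) _ r t c) => u v.
rewrite /induced /= => /and3P[uU vU auv].
have ShP : forall x, (x \in Sh) = (x.1 \in S) || (x.2 && (x.1 \in R :|: T)).
  move=> [w b]; rewrite /Sh in_setU in_setX in_setT andbT /=; congr (_ || _).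
  apply/imsetP/andP => [[y yRT [-> ->]]|[-> yRT]] //; by exists w.
have UP : forall x, (x \in hat0 R :|: Sh :|: hat0 T) =
   [|| ~~ x.2 && (x.1 \in R), (x.1 \in S) || (x.2 && (x.1 \in R :|: T)) | ~~ x.2 && (x.1 \in T)].
  by move=> x; rewrite in_setU [x \in hat0 R :|: Sh]in_setU ShP !hat0P !orbA.
have inU : forall w, w \in R :|: S :|: T -> (w, false) \in hat0 R :|: Sh :|: hat0 T.
  by move=> w; rewrite UP /= !in_setU orbF orbA.
have inU1 : (v, true) \in hat0 R :|: Sh :|: hat0 T.
  move: vU; rewrite UP /= !in_setU orbF. case/orP=>[/orP[]|] ->; by rewrite ?orbT.
apply: (@connect_trans _ _ (v, true)); apply: connect1; rewrite /induced /= ?inU ?inU1 //=.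
Qed.

Lemma backward (V : finType) (a : rel V) (R T : {set V}) (k : nat) (Sh : {set V * bool}) :
  R :&: T = set0 ->
  #|Sh| <= 2 * k + #|R :|: T| -> solution (fork a) (hat0 R) (hat0 T) Sh ->
  exists S : {set V},
      [/\ S \subset ~: (R :|: T), #|S| <= k & solution a R T S].
Proof.
move=> RT0 card sol.
have [R0|[r0 r0R]] := set_0Vmem R.
  exists set0; split; rewrite ?cards0 ?sub0set //.
  by move=> r t; rewrite R0 inE.
set U := hat0 R :|: Sh :|: hat0 T.
have UP : forall x, (x \in U) = [|| ~~ x.2 && (x.1 \in R), x \in Sh | ~~ x.2 && (x.1 \in T)].
  by move=> x; rewrite /U !in_setU !hat0P orbA.
set S := [set v | [&& v \notin R :|: T, (v,false) \in Sh & (v,true) \in Sh]].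
set B := [set v in R :|: T | (v,true) \in Sh].
have need1 : forall r v, r \in R -> v \in R :|: T -> r != v -> (v, true) \in Sh.
  move=> r v rR vRT rv.
  have c : connect (induced (fork a) U) (r, false) (v, false).
    apply: sol; first by rewrite hat0P /= rR.
    move: vRT; rewrite !in_setU !hat0P /=; done.
  have [|[z b] /and3P[zU vU f]] := @last_step _ _ _ _ c; first by apply/eqP => -[] rv'; rewrite rv' eqxx in rv.
  case: b f zU => //= /eqP <-; by rewrite UP /= orbF.
have cardRT : #|R :|: T| <= #|B| + 1.
  rewrite -(cardsID B (R :|: T)).
  have h1 : #|(R :|: T) :&: B| <= #|B| by apply: subset_leq_card; apply: subsetIr.
  suff h2 : #|(R :|: T) :\: B| <= 1 by lia.
  apply/card_le1_eqP => x y.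
  have eq0 : forall w, w \in (R :|: T) :\: B -> w = r0.
    move=> w; rewrite in_setD in_set => /andP[/negP nB wRT].
    case: (eqVneq r0 w) => // rw; exfalso; apply: nB; rewrite wRT /=.
    exact: need1 r0R wRT rw.
  by move=> /eq0 -> /eq0 ->.
have cardSh : 2 * #|S| + #|B| <= #|Sh|.
  have sub : setX S setT :|: [set (v, true) | v in B] \subset Sh.
    apply/subsetP => -[v b]; rewrite in_setU in_setX in_setT andbT /=.
    case/orP => [|/imsetP[w wB [-> ->]]]; first by rewrite in_set => /and3P[_ h1 h2]; case: b.
    by move: wB; rewrite in_set => /andP[_].
  have := subset_leq_card sub; rewrite cardsU cardsX cardsT card_bool.
  rewrite card_imset; last by move=> u v [].
  have -> : setX S setT :&: [set (v, true) | v in B] = set0.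
    apply/eqP; rewrite -subset0; apply/subsetP => -[x b]; rewrite in_setI in_setX.
    case/andP => [/andP[xS _] /imsetP[v vB [xv _]]]; move: xS vB; rewrite /= xv !in_set /=.
    by case/and3P => /negbTE -> _ _; case/andP.
  rewrite cards0 subn0 mulnC; done.
exists S; split.
- by apply/subsetP => v; rewrite in_set in_setC; case/andP.
- lia.
move=> r t rR tRT.
set UG := R :|: S :|: T.
have c : connect (induced (fork a) U) (r, false) (t, false).
  apply: sol; first by rewrite hat0P /= rR.
  move: tRT; rewrite !in_setU !hat0P /=; done.
move: c => /connectP[p pp lp].
pose Q (x : V * bool) : Prop := if x.2 then exists u, [/\ u \in UG, connect (induced a UG) r u & a u x.1]
  else x.1 \in UG /\ connect (induced a UG) r x.1.
have step : forall x y, Q x -> induced (fork a) U x y -> Q y; last first.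
  have := @path_inv _ _ Q step p (r, false) pp.
  rewrite -lp /Q /=; case; last by [].
  by rewrite !in_setU rR.
move=> [u b] [v b'] /=; rewrite /induced /= => Qx /and3P[xU yU f].
case: b b' f Qx xU yU => [] [] //= f.
  move: f => /eqP <- [w [wUG cw awu]] xU yU.
  have uUG : u \in UG.
    move: xU yU; rewrite !UP /= orbF => uSh.
    rewrite /UG !in_setU; case/or3P => [->|h|->]; rewrite ?orbT //.
    case: (boolP (u \in R :|: T)); first by rewrite in_setU; case/orP => ->; rewrite ?orbT.
    by move=> nRT; rewrite in_set nRT h uSh orbT.
  split => //; apply: connect_trans cw (connect1 _); by rewrite /induced /= wUG uUG awu.
by case=> uUG cu _ _; exists u.
Qed.

Theorem lemma5 (V : finType) (a : rel V) (R T : {set V}) (k : nat) :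
  R :&: T = set0 ->
  (exists S : {set V},
      [/\ S \subset ~: (R :|: T), #|S| <= k & solution a R T S])
  <->
  (exists Sh : {set V * bool},
      #|Sh| <= 2 * k + #|R :|: T| /\ solution (fork a) (hat0 R) (hat0 T) Sh).
Proof.
move=> RT0; split.
  by case=> S [_ Sk sol]; apply: forward Sk sol.
by case=> Sh [c sol]; apply: backward RT0 c sol.
Qed.
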